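(* Let $G$ be a finite nonabelian group having a nonnormal subgroup $S$ of index $[G:S]=3$. Then $\beta(G)\ge \frac{4}{3}|G|$.
   Context: For a nonempty subset $X$ of a group $G$, $Q(X):=\{xy^{-1}: x,y\in X\}$. Nonempty subsets $S_1,S_2,S_3$ of $G$ satisfy the Triple Product Property (TPP) if for all $s_i\in Q(S_i)$: $s_1s_2s_3=1$ iff $s_1=s_2=s_3=1$. A group $G$ realizes $\langle n,p,m\rangle$ if there are subsets $S_1,S_2,S_3\subseteq G$ with $|S_1|=n$, $|S_2|=p$, $|S_3|=m$ satisfying the TPP. For a nontrivial finite group $G$, the TPP capacity is $\beta(G):=\max\{npm : G \text{ realizes } \langle n,p,m\rangle\}$. *)

(* Defs.v *)
From mathcomp Require Import all_boot all_fingroup.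
Set Implicit Arguments. Unset Strict Implicit. Unset Printing Implicit Defensive.
Local Open Scope group_scope.

Definition Qset (gT : finGroupType) (X : {set gT}) : {set gT} :=
  [set x * y^-1 | x in X, y in X].

Definition TPP (gT : finGroupType) (S1 S2 S3 : {set gT}) : bool :=
  [&& S1 != set0, S2 != set0, S3 != set0 &
   [forall s1 in Qset S1, forall s2 in Qset S2, forall s3 in Qset S3,
      (s1 * s2 * s3 == 1) == [&& s1 == 1, s2 == 1 & s3 == 1]]].

Definition realizes (gT : finGroupType) (G : {set gT}) (n p m : nat) : Prop :=
  exists S1 S2 S3 : {set gT},
    [/\ S1 \subset G, S2 \subset G & S3 \subset G] /\
    [/\ #|S1| = n, #|S2| = p, #|S3| = m & TPP S1 S2 S3].

Definition beta (gT : finGroupType) (G : {set gT}) : nat :=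
  \max_(S : {set gT} * {set gT} * {set gT} |
          [&& S.1.1 \subset G, S.1.2 \subset G, S.2 \subset G &
              TPP S.1.1 S.1.2 S.2])
     (#|S.1.1| * #|S.1.2| * #|S.2|)%N.

(* Main.v *)
Require Import Defs.
From mathcomp Require Import all_boot all_fingroup.
Set Implicit Arguments. Unset Strict Implicit.
Local Open Scope group_scope.

Lemma tri (gT : finGroupType) (G S : {group gT}) (g h z : gT) :
  S \subset G -> #|G : S| = 3 -> g \in G -> h \in G -> z \in G ->
  g \notin S -> h \notin S -> g * h^-1 \notin S ->
  [|| z \in S, z * g^-1 \in S | z * h^-1 \in S].
Proof.
move=> sSG iS gG hG zG gS hS ghS.
apply/negPn/negP; rewrite !negb_or => /and3P [zS zgS zhS].
have U : uniq [:: S :* 1; S :* g; S :* h; S :* z].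
  rewrite /= !inE !negb_or -!andbA.
  have ne : forall u v, u * v^-1 \notin S -> S :* u != S :* v.
    by move=> u v uv; apply/eqP => /rcoset_eqP; rewrite mem_rcoset; apply/negP.
  rewrite !ne ?mul1g ?groupV // -groupV invMg invgK //.
have : 4 <= #|rcosets S G|.
  apply: leq_trans (eq_leq (esym (card_uniqP U))) _; apply: subset_leq_card; apply/subsetP => C.
  by rewrite !inE => /or4P [] /eqP ->; apply/rcosetsP; [exists 1|exists g|exists h|exists z]; rewrite ?group1.
by rewrite -/(#|G : S|) iS.
Qed.

Lemma Q2 (gT : finGroupType) (a s : gT) :
  s \in Qset [set 1; a] -> [\/ s = 1, s = a | s = a^-1].
Proof.
case/imset2P => u v /set2P [] -> /set2P [] -> ->;
 rewrite ?invg1 ?mulg1 ?mul1g ?mulgV; by [constructor 1|constructor 2|constructor 3].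
Qed.

Lemma QS (gT : finGroupType) (S : {group gT}) s : s \in Qset S -> s \in S.
Proof. by case/imset2P => u v uS vS ->; rewrite groupM ?groupV. Qed.

Lemma tpp_ab (gT : finGroupType) (S : {group gT}) (a b : gT) :
  a \notin S -> b \notin S -> a * a \in S -> b * b \in S -> a * b \notin S ->
  TPP S [set 1; a] [set 1; b].
Proof.
move=> aS bS aaS bbS abS.
have f1 : a^-1 \notin S by rewrite groupV.
have f2 : b^-1 \notin S by rewrite groupV.
have f3 : a * b^-1 \notin S.
  apply: contra abS => H; have := groupM H bbS.
  by rewrite mulgA mulgKV.
have f4 : a^-1 * b \notin S.
  apply: contra abS => H; have := groupM aaS H.
  by rewrite -mulgA mulKVg.
have f5 : a^-1 * b^-1 \notin S.
  apply: contra abS => H; have := groupM (groupM aaS H) bbS.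
  by rewrite -(mulgA a a) mulKVg mulgA mulgKV.
have key : forall s2 s3, s2 \in Qset [set 1; a] -> s3 \in Qset [set 1; b] ->
   s2 * s3 \in S -> s2 = 1 /\ s3 = 1.
  move=> s2 s3 /Q2 [] -> /Q2 [] -> //; rewrite ?mulg1 ?mul1g => H;
   by [ rewrite H in bS | rewrite H in f2 | rewrite H in aS | rewrite H in abS
      | rewrite H in f3 | rewrite H in f1 | rewrite H in f4 | rewrite H in f5 ].
apply/and4P; split.
- by apply/set0Pn; exists 1; rewrite group1.
- by apply/set0Pn; exists 1; rewrite !inE eqxx.
- by apply/set0Pn; exists 1; rewrite !inE eqxx.
apply/forall_inP => s1 Hs1; apply/forall_inP => s2 Hs2; apply/forall_inP => s3 Hs3.
apply/eqP; apply/idP/idP.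
- move/eqP => E.
  have : s2 * s3 \in S.
    have -> : s2 * s3 = s1^-1 by rewrite -(mulKg s1 (s2 * s3)) (mulgA s1) E mulg1.
    by rewrite groupV QS.
  case/(key _ _ Hs2 Hs3) => e2 e3; move: E; rewrite e2 e3 !mulg1 => ->.
  by rewrite !eqxx.
- by case/and3P => /eqP -> /eqP -> /eqP ->; rewrite !mulg1.
Qed.

Lemma normal_of_conj (gT : finGroupType) (G S : {group gT}) :
  S \subset G -> (forall g x, g \in G -> x \in S -> g * x * g^-1 \in S) -> S <| G.
Proof.
move=> sSG H; rewrite /normal sSG /=; apply/subsetP => g gG; rewrite inE.
apply/subsetP => y; rewrite mem_conjg conjgE invgK => yS.
by have := H _ _ (groupVr gG) yS; rewrite invgK -!mulgA mulKg mulVg mulg1.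
Qed.

Lemma exist_a (gT : finGroupType) (G S : {group gT}) :
  S \subset G -> #|G : S| = 3 -> ~~ (S <| G) ->
  exists a, [/\ a \in G, a \notin S & a * a \in S].
Proof.
move=> sSG iS nN.
case: (boolP [exists a in G, (a \notin S) && (a * a \in S)]).
  by case/exists_inP => a aG /andP [aS aaS]; exists a.
move/exists_inPn => H; suff : S <| G by rewrite (negbTE nN).
apply: normal_of_conj => // g x gG xS.
have Hn : forall u, u \in G -> u \notin S -> u * u \notin S.
  by move=> u uG uS; have := H u uG; rewrite uS.
case: (boolP (g \in S)) => gS.
  by rewrite !groupM ?groupV // (subsetP sSG).
have ggS := Hn g gG gS.
have ggG : g * g \in G by rewrite groupM.
have gi : g * (g * g)^-1 \notin S by rewrite invMg mulgA mulgV mul1g groupV.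
have gggS : g * g * g \in S.
  case/or3P: (tri sSG iS gG ggG (groupM ggG gG) gS ggS gi) => //.
  - by rewrite mulgK => K; rewrite K in ggS.
  - by rewrite invMg !mulgA mulgK mulgK => K; rewrite K in gS.
have xG := subsetP sSG x xS.
case/or3P: (tri sSG iS gG ggG (groupM gG xG) gS ggS gi) => //.
- by rewrite groupMr // => K; rewrite K in gS.
- move=> E.
  have gxg : g * x * g \in S.
    have := groupM E gggS.
    by rewrite invMg !mulgA mulgKV mulgKV.
  have gxS : g * x \notin S by rewrite groupMr.
  have := Hn _ (groupM gG xG) gxS.
  by rewrite mulgA groupMr // gxg.
Qed.

Lemma exist_x (gT : finGroupType) (G S : {group gT}) (a : gT) :
  S \subset G -> #|G : S| = 3 -> ~~ (S <| G) -> a \in G -> a \notin S ->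
  exists2 x, x \in S & a * x * a^-1 \notin S.
Proof.
move=> sSG iS nN aG aS.
case: (boolP [exists x in S, a * x * a^-1 \notin S]).
  by case/exists_inP => x xS H; exists x.
move/exists_inPn => H; exfalso.
have aN : a \in 'N(S).
  rewrite -groupV inE; apply/subsetP => y /imsetP [x xS ->].
  by rewrite conjgE invgK mulgA; have := H x xS; rewrite negbK.
have sSN : S \subset 'N_G(S) by rewrite subsetI sSG normG.
have sNG : 'N_G(S) \subset G by apply: subsetIl.
have E := Lagrange_index sNG sSN; rewrite iS in E.
have /primeP [_ Hp] : prime 3 by [].
have : #|'N_G(S) : S| %| 3 by rewrite -E dvdn_mull.
case/Hp/orP => /eqP E2.
  have := index1g sSN E2 => ES.
  by move: aS; rewrite ES inE aG aN.
rewrite E2 in E; have E1 : #|G : 'N_G(S)| = 1%N by move: E; case: (#|G : 'N_G(S)%G|) => [|[|n]] //; rewrite mulSn; case: (_ * 3)%N.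
have := index1g sNG E1 => EN.
suff : S <| G by rewrite (negbTE nN).
rewrite /normal sSG /=; have := subsetIr G 'N(S); by rewrite -/('N_G(S)) EN.
Qed.

Theorem mainTheorem4 (gT : finGroupType) (G S : {group gT}) :
  ~~ abelian G -> S \subset G -> ~~ (S <| G)%g -> #|G : S|%g = 3 ->
  (4 * #|G| <= 3 * beta G)%N.
Proof.
move=> _ sSG nN iS.
have [a [aG aS aaS]] := exist_a sSG iS nN.
have [x xS axS] := exist_x sSG iS nN aG aS.
have xG := subsetP sSG x xS.
pose b := a * x * a^-1.
have bG : b \in G by rewrite !groupM ?groupV.
have axnS : a * x \notin S by rewrite groupMr.
have axG : a * x \in G by rewrite groupM.
have gi : a * (a * x)^-1 \notin S.
  by rewrite -groupV !invMg !invgK.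
have bbS : b * b \in S.
  case/or3P: (tri sSG iS aG axG (groupM axG xG) aS axnS gi).
  - by move=> K; move: aS; rewrite -(groupMr a xS) -(groupMr (a * x) xS) K.
  - by rewrite /b !mulgA mulgKV => ->.
  - by rewrite invMg !mulgA mulgK => K; rewrite K in axS.
have abS : a * b \notin S.
  apply: contra aS => H.
  have : (a * a * x) * a^-1 \in S by rewrite /b !mulgA in H.
  by rewrite (groupMl _ (groupM aaS xS)) groupV.
have T := tpp_ab aS axS aaS bbS abS.
have s1 : [set 1; a] \subset G by apply/subsetP => y /set2P [] ->; rewrite ?group1.
have s2 : [set 1; b] \subset G by apply/subsetP => y /set2P [] ->; rewrite ?group1.
have := @leq_bigmax_cond _
  (fun S' : {set gT} * {set gT} * {set gT} => [&& S'.1.1 \subset G, S'.1.2 \subset G, S'.2 \subset G &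
              TPP S'.1.1 S'.1.2 S'.2])
  (fun S' => #|S'.1.1| * #|S'.1.2| * #|S'.2|)%N (S : {set gT}, [set 1; a], [set 1; b]).
rewrite /= sSG s1 s2 T /= -/(beta G) => /(_ isT).
have a1 : (1 != a) by apply: contraNneq aS => <-; rewrite group1.
have b1 : (1 != b) by apply/eqP => E; move: axS; rewrite -/b -E group1.
rewrite !cards2 a1 b1 -(Lagrange sSG) iS => H.
apply: leq_trans (leq_mul (leqnn 3) H).
by rewrite [X in (X <= _)%N]mulnC [X in (_ <= X)%N]mulnC -!mulnA.
Qed.
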